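(* Let $X_o$ be a compact Hausdorff space, $\theta$ a homeomorphism of $X_o$ such that $(X_o,\theta)$ is uniquely ergodic with invariant measure $\mu_o$, $f\in C(X_o;\mathbb{T})$, and $\Phi_{\theta,f}(x,w):=(\theta(x),f(x)w)$ acting on $C(X_o\times\mathbb{T})$ by $h\mapsto h\circ\Phi_{\theta,f}$. Suppose $(C(X_o\times\mathbb{T}),\Phi_{\theta,f})$ is uniquely ergodic with respect to the fixed-point subalgebra and that $C(X_o\times\mathbb{T})^{\Phi_{\theta,f}}\ne\mathbb{C}1$; let $\rho:C(X_o\times\mathbb{T})^{\Phi_{\theta,f}}\to C(\mathbb{T})$ be a $*$-isomorphism, and $E^{\Phi_{\theta,f}}$ the unique $\Phi_{\theta,f}$-invariant conditional expectation of $C(X_o\times\mathbb{T})$ onto $C(X_o\times\mathbb{T})^{\Phi_{\theta,f}}$. Then the map $T(\mu):=\mu\circ\rho\circ E^{\Phi_{\theta,f}}$ is an affine bijection from the set $\mathcal{P}(\mathbb{T})$ of regular Borel probability measures on $\mathbb{T}$ (viewed as states on $C(\mathbb{T})$) onto the set of $\Phi_{\theta,f}$-invariant regular Borel probability measures on $X_o\times\mathbb{T}$.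
   Context: A system $(\mathfrak{B},\beta)$ is uniquely ergodic with respect to the fixed-point subalgebra if the Ces\`aro averages $\frac1n\sum_{k=0}^{n-1}\beta^k(x)$ converge in norm for every $x\in\mathfrak{B}$; equivalently every state on $\mathfrak{B}^\beta$ has a unique $\beta$-invariant state extension to $\mathfrak{B}$; in this case the limit defines a $\beta$-invariant conditional expectation onto $\mathfrak{B}^\beta$. Under the hypotheses, the fixed-point subalgebra is $*$-isomorphic to $C(\mathbb{T})$. Measures are identified with states via the Riesz–Markov theorem. *)

(* Defs.v *)
From HB Require Import structures.
From mathcomp Require Import all_boot all_order all_algebra.
From mathcomp Require Import all_classical all_reals all_analysis.
From mathcomp Require Import complex.
Import Order.TTheory GRing.Theory Num.Theory.
Import numFieldNormedType.Exports numFieldTopology.Exports.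

Set Implicit Arguments.
Unset Strict Implicit.
Unset Printing Implicit Defensive.

Local Open Scope ring_scope.
Local Open Scope classical_set_scope.

HB.instance Definition _ (R : rcfType) :=
  PseudoPointedMetric.copy (complex R) (complex R)^o.

Section Defs.
Variable R : realType.
Local Notation C := (R[i]).

Definition Circle : topologicalType := set_type [set z : C | `|z| = 1].

Lemma circle_mul_subproof (a b : Circle) :
  [set z : C | `|z| = 1] (set_val a * set_val b).
Proof.
have /set_mem Ha := valP a; have /set_mem Hb := valP b.
by rewrite /= normrM Ha Hb mulr1.
Qed.

Definition circle_mul (a b : Circle) : Circle :=
  @exist _ (fun z => z \in [set z : C | `|z| = 1]) (set_val a * set_val b)
    (mem_set (circle_mul_subproof a b)).

Definition skew_product (X : Type) (theta : X -> X) (f : X -> Circle)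
    (p : X * Circle) : X * Circle :=
  (theta p.1, circle_mul (f p.1) p.2).

Definition Cfun (Y : topologicalType) := {h : Y -> C | continuous h}.

(* States on C(Y) = positive unital linear functionals
   (identified with regular Borel probability measures by Riesz-Markov).
   Operations on C(Y) are taken pointwise. *)
Definition is_state (Y : topologicalType) (phi : Cfun Y -> C) : Prop :=
  [/\ (forall (h1 h2 : Y -> C) (c1 : continuous h1) (c2 : continuous h2)
          (c : continuous (fun y => h1 y + h2 y)),
          phi (exist _ _ c) = phi (exist _ _ c1) + phi (exist _ _ c2)),
      (forall (a : C) (h : Y -> C) (c1 : continuous h)
          (c : continuous (fun y => a * h y)),
          phi (exist _ _ c) = a * phi (exist _ _ c1)),
      (forall (h : Y -> C) (c : continuous h),
          (forall y, 0 <= h y) -> 0 <= phi (exist _ _ c)) &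
      (forall c : continuous (fun _ : Y => 1 : C), phi (exist _ _ c) = 1)].

Definition is_invariant (Y : topologicalType) (F : Y -> Y)
    (phi : Cfun Y -> C) : Prop :=
  forall (h : Y -> C) (c : continuous h) (c' : continuous (h \o F)),
    phi (exist _ _ c') = phi (exist _ _ c).

Definition uniquely_ergodic_with (Y : topologicalType) (F : Y -> Y)
    (mu : Cfun Y -> C) : Prop :=
  [/\ is_state mu, is_invariant F mu &
      forall nu, is_state nu -> is_invariant F nu -> nu = mu].

Definition cesaro (Y : Type) (F : Y -> Y) (h : Y -> C) (n : nat) (y : Y) : C :=
  (n%:R)^-1 * \sum_(k < n) h (iter k F y).

Definition cesaro_unif_cvg (Y : Type) (F : Y -> Y) (h g : Y -> C) : Prop :=
  forall e : C, 0 < e -> \forall n \near \oo, forall y, `|cesaro F h n y - g y| < e.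

Definition FixAlg (Y : topologicalType) (F : Y -> Y) :=
  {h : Y -> C | continuous h /\ h \o F = h}.

Definition is_star_iso (Y Z : topologicalType) (F : Y -> Y)
    (rho : FixAlg F -> Cfun Z) : Prop :=
  bijective rho /\
  [/\ (forall (h1 h2 : Y -> C) (c1 : continuous h1 /\ h1 \o F = h1)
          (c2 : continuous h2 /\ h2 \o F = h2)
          (c : continuous (fun y => h1 y + h2 y) /\ (fun y => h1 y + h2 y) \o F = (fun y => h1 y + h2 y)),
          sval (rho (exist _ _ c)) = (fun z => sval (rho (exist _ _ c1)) z + sval (rho (exist _ _ c2)) z)),
      (forall (a : C) (h : Y -> C) (c1 : continuous h /\ h \o F = h)
          (c : continuous (fun y => a * h y) /\ (fun y => a * h y) \o F = (fun y => a * h y)),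
          sval (rho (exist _ _ c)) = (fun z => a * sval (rho (exist _ _ c1)) z)),
      (forall (h1 h2 : Y -> C) (c1 : continuous h1 /\ h1 \o F = h1)
          (c2 : continuous h2 /\ h2 \o F = h2)
          (c : continuous (fun y => h1 y * h2 y) /\ (fun y => h1 y * h2 y) \o F = (fun y => h1 y * h2 y)),
          sval (rho (exist _ _ c)) = (fun z => sval (rho (exist _ _ c1)) z * sval (rho (exist _ _ c2)) z)),
      (forall (h : Y -> C) (c1 : continuous h /\ h \o F = h)
          (c : continuous (fun y => (h y)^*) /\ (fun y => (h y)^*) \o F = (fun y => (h y)^*)),
          sval (rho (exist _ _ c)) = (fun z => (sval (rho (exist _ _ c1)) z)^*)) &
      (forall c : continuous (fun _ : Y => 1 : C) /\ (fun _ : Y => 1 : C) \o F = (fun _ => 1),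
          sval (rho (exist _ _ c)) = (fun _ => 1))].

Definition Tmap (Y Z : topologicalType) (F : Y -> Y)
    (rho : FixAlg F -> Cfun Z) (E : Cfun Y -> FixAlg F)
    (mu : Cfun Z -> C) : Cfun Y -> C :=
  fun h => mu (rho (E h)).

End Defs.

(* Main.v *)
Require Import Defs.
From HB Require Import structures.
From mathcomp Require Import all_boot all_order all_algebra.
From mathcomp Require Import all_classical all_reals all_analysis.
From mathcomp Require Import complex.
Import Order.TTheory GRing.Theory Num.Theory.
Import numFieldNormedType.Exports numFieldTopology.Exports.
Local Open Scope ring_scope.
Local Open Scope classical_set_scope.
Lemma half_id (K : numFieldType) (x e : K) : x = ((e + x) - (e - x)) / 2%:R.
Proof.
by rewrite opprB [e + x]addrC -addrA (addrCA e) subrr addr0 mulrDl -splitr.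
Qed.

Lemma small0 (K : numFieldType) (x : K) : (forall e, 0 < e -> `|x| <= e) -> x = 0.
Proof.
move=> H; apply/eqP; apply/negPn/negP => x0.
have nx : 0 < `|x| by rewrite normr_gt0.
have := H (`|x| / 2%:R) (divr_gt0 nx (ltr0n _ 2)).
by rewrite ler_pdivlMr ?ltr0n // ger_pMr // lern1.
Qed.

Section Gen.
Variable R : realType.
Local Notation C := (R[i]).
Variable Y : topologicalType.

Lemma ct_add (f g : Y -> C) : continuous f -> continuous g -> continuous (fun y => f y + g y).
Proof. move=> cf cg y. apply: (@cvgD _ (C^o)). exact: cf. exact: cg. Qed.
Lemma ct_mul (f g : Y -> C) : continuous f -> continuous g -> continuous (fun y => f y * g y).
Proof. move=> cf cg y. apply: (@cvgM C). exact: cf. exact: cg. Qed.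
Lemma ct_cst (a : C) : continuous (fun _ : Y => a).
Proof. exact: cst_continuous. Qed.
Lemma ct_opp (f : Y -> C) : continuous f -> continuous (fun y => - f y).
Proof.
move=> cf; have -> : (fun y => - f y) = (fun y => -1 * f y) by apply: funext => y; rewrite mulN1r.
exact: (ct_mul _ _ (ct_cst _) cf).
Qed.
Lemma ct_inv (f : Y -> C) : continuous f -> (forall y, f y != 0) -> continuous (fun y => (f y)^-1).
Proof. move=> cf nz y. apply: (@cvgV C) => //. exact: cf. Qed.
Lemma ct_conj (f : Y -> C) : continuous f -> continuous (fun y => (f y)^*).
Proof.
move=> cf y; apply/(@cvgrPdist_lt _ (C^o) _ _ _ (fun z => (f z)^*) ((f y)^*)) => e e0.
have := (@cvgrPdist_lt _ (C^o) _ _ _ f (f y)).1 (cf y) e e0.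
move=> H; near=> z; rewrite -rmorphB norm_conjC; near: z; exact: H.
Unshelve. all: by end_near. 
Qed.
Lemma ct_Re (f : Y -> C) : continuous f -> continuous (fun y => 'Re (f y)).
Proof.
move=> cf; have -> : (fun y => 'Re (f y)) = (fun y => (f y + (f y)^*) * 2%:R^-1).
  by apply: funext => y; rewrite ReE.
exact: (ct_mul _ _ (ct_add _ _ cf (ct_conj _ cf)) (ct_cst _)).
Qed.
Lemma ct_Im (f : Y -> C) : continuous f -> continuous (fun y => 'Im (f y)).
Proof.
move=> cf; have -> : (fun y => 'Im (f y)) = (fun y => -1 * 'Re ('i * f y)).
  by apply: funext => y; rewrite ReMil mulN1r opprK.
exact: (ct_mul _ _ (ct_cst _) (ct_Re _ (ct_mul _ _ (ct_cst 'i) cf))).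
Qed.

Lemma cf_eq (a b : Cfun R Y) : sval a = sval b -> a = b.
Proof. apply: eq_sig_hprop => x p q; exact: Prop_irrelevance. Qed.

Section State.
Variable psi : Cfun R Y -> C.
Hypothesis hpsi : is_state psi.

Lemma st_ext h1 h2 c1 c2 : h1 = h2 -> psi (exist _ h1 c1) = psi (exist _ h2 c2).
Proof. by move=> e; congr psi; apply: cf_eq. Qed.

Lemma st_add h1 h2 c1 c2 c : psi (exist _ (fun y => h1 y + h2 y) c) = psi (exist _ h1 c1) + psi (exist _ h2 c2).
Proof. by case: hpsi => + _ _ _; apply. Qed.

Lemma st_scale a h c1 c : psi (exist _ (fun y => a * h y) c) = a * psi (exist _ h c1).
Proof. by case: hpsi => _ + _ _; apply. Qed.

Lemma st_pos h c : (forall y, 0 <= h y) -> 0 <= psi (exist _ h c).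
Proof. by case: hpsi => _ _ + _; apply. Qed.

Lemma st_const a c : psi (exist _ (fun _ => a) c) = a.
Proof.
have c1 := ct_cst (1 : C).
have ca : continuous (fun _ : Y => a * 1) := ct_cst _.
rewrite (st_ext _ (fun y => a * (fun _ => 1) y) c ca); last by apply: funext => y; rewrite mulr1.
rewrite (st_scale _ _ c1); case: hpsi => _ _ _ ->; by rewrite mulr1.
Qed.

Lemma st_sub h1 h2 c1 c2 c : psi (exist _ (fun y => h1 y - h2 y) c) = psi (exist _ h1 c1) - psi (exist _ h2 c2).
Proof.
have cn : continuous (fun y => -1 * h2 y) := ct_mul _ _ (ct_cst _) c2.
have cs : continuous (fun y => h1 y + (fun y => -1 * h2 y) y) := ct_add _ _ c1 cn.
rewrite (st_ext _ _ c cs); last by apply: funext => y /=; rewrite mulN1r.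
by rewrite (st_add _ _ c1 cn) (st_scale _ _ c2) mulN1r.
Qed.

Lemma st_real_bound u c (e : C) : (forall y, u y \is Num.real) -> (forall y, `|u y| <= e) ->
  psi (exist _ u c) \is Num.real /\ `|psi (exist _ u c)| <= e.
Proof.
move=> ur ub.
have ce := ct_cst e.
have c1 : continuous (fun y => e - u y) := ct_add _ _ ce (ct_opp _ c).
have c2 : continuous (fun y => e + u y) := ct_add _ _ ce c.
have h1 : 0 <= e - psi (exist _ u c).
  rewrite -(st_const _ ce) -(st_sub _ _ ce c c1); apply: st_pos => y.
  rewrite subr_ge0; exact: real_ler_normlW (ur y) (ub y).
have h2 : 0 <= e + psi (exist _ u c).
  rewrite -(st_const _ ce) -(st_add _ _ ce c c2); apply: st_pos => y.
  have := ub y; rewrite (real_ler_norml _ (ur y)) => /andP[+ _].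
  by rewrite lerNl -subr_ge0 opprK addrC.
have rp : psi (exist _ u c) \is Num.real.
  rewrite (@half_id _ (psi (exist _ u c)) e).
  by apply: realM; [apply: realB; apply: ger0_real | apply: ger0_real; rewrite invr_ge0 ler0n].
split => //; rewrite (real_ler_norml _ rp); apply/andP; split.
  by rewrite lerNl -subr_ge0 opprK.
by rewrite -subr_ge0.
Qed.
Lemma st_bound g c (e : C) : (forall y, `|g y| <= e) -> `|psi (exist _ g c)| <= e *+ 2.
Proof.
move=> gb.
have cr := ct_Re _ c; have ci := ct_Im _ c.
have cim : continuous (fun y => 'i * 'Im (g y)) := ct_mul _ _ (ct_cst _) ci.
have cs : continuous (fun y => 'Re (g y) + (fun y => 'i * 'Im (g y)) y) := ct_add _ _ cr cim.
rewrite (st_ext _ _ c cs); last by apply: funext => y /=; rewrite -Crect.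
rewrite (st_add _ _ cr cim) (st_scale _ _ ci).
have [_ br] := st_real_bound _ cr _ (fun y => Creal_Re _) (fun y => le_trans (leif_normC_Re_Creal (g y)).1 (gb y)).
have bi : forall y, `|'Im (g y)| <= e.
  move=> y; apply: le_trans (gb y).
  rewrite -[X in `|X| <= _]opprK -ReMil normrN; apply: le_trans (leif_normC_Re_Creal _).1 _.
  by rewrite normrM normCi mul1r.
have [_ bi'] := st_real_bound _ ci _ (fun y => Creal_Im _) bi.
rewrite mulr2n; apply: le_trans (ler_normD _ _) _; apply: lerD => //.
by rewrite normrM normCi mul1r.
Qed.
Lemma st_add' (a b s : Cfun R Y) : sval s = (fun y => sval a y + sval b y) -> psi s = psi a + psi b.
Proof. case: a b s => [ga ca] [gb cb] [gs cs] /= e; subst gs; exact: st_add. Qed.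
Lemma st_scale' x (a s : Cfun R Y) : sval s = (fun y => x * sval a y) -> psi s = x * psi a.
Proof. case: a s => [ga ca] [gs cs] /= e; subst gs; exact: st_scale. Qed.
Lemma st_pos' (s : Cfun R Y) : (forall y, 0 <= sval s y) -> 0 <= psi s.
Proof. case: s => [gs cs] /=; exact: st_pos. Qed.
Lemma st_one' (s : Cfun R Y) : sval s = (fun _ => 1) -> psi s = 1.
Proof. case: s => [gs cs] /= e; subst gs; by case: hpsi => _ _ _ ->. Qed.
End State.
End Gen.

Section Main.
Variables (R : realType) (X : topologicalType) (theta : X -> X) (f : X -> Circle R).
Hypotheses (ct : continuous theta) (hf : continuous f).
Local Notation C := (R[i]).
Local Notation W := (X * Circle R)%type.
Local Notation F := (skew_product theta f).

Lemma t2o (Y : topologicalType) (g h : Y -> (R[i])^o) : continuous g -> continuous h -> continuous (fun y => g y * h y).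
Proof. move=> cg ch y. apply: cvgM. exact: cg. exact: ch. Qed.

Lemma F_cont : continuous F.
Proof.
move=> p.
have H1 : (fun q : X * Circle R => theta q.1) @ nbhs p --> theta p.1.
  apply: continuous_comp; [exact: cvg_fst | exact: ct].
have H2 : continuous (fun q : X * Circle R => circle_mul (f q.1) q.2).
  apply: (@continuous_comp_initial _ _ _ (@set_val _ [set z : R[i] | `|z| = 1])).
  apply: (@t2o _ (fun p : X * Circle R => set_val (f p.1)) (fun p => set_val p.2)).
    move=> q; apply: (@continuous_comp _ _ _ fst (fun x => set_val (f x))); first exact: cvg_fst.
    apply: (@continuous_comp _ _ _ f set_val); first exact: hf.
    exact: initial_continuous.
  move=> q; apply: (@continuous_comp _ _ _ snd set_val); first exact: cvg_snd.
  exact: initial_continuous.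
exact: (cvg_pair H1 (H2 p)).
Qed.

Lemma iter_cont k : continuous (iter k F).
Proof.
elim: k => [|k IH] p /=; first exact: cvg_id.
exact: (@continuous_comp _ _ _ (iter k F) F p (IH p) (F_cont _)).
Qed.

Lemma comp_cont (h : W -> C) k : continuous h -> continuous (fun y => h (iter k F y)).
Proof. move=> ch p; exact: (@continuous_comp _ _ _ (iter k F) h p (iter_cont k p) (ch _)). Qed.

Lemma sum_cont (h : W -> C) n : continuous h -> continuous (fun y => \sum_(k < n) h (iter k F y)).
Proof.
move=> ch; elim: n => [|n IH].
  have -> : (fun y : W => \sum_(k < 0) h (iter k F y)) = (fun _ => 0) by apply: funext => y; rewrite big_ord0.
  exact: (ct_cst _).
have -> : (fun y : W => \sum_(k < n.+1) h (iter k F y)) = (fun y => \sum_(k < n) h (iter k F y) + h (iter n F y)).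
  by apply: funext => y; rewrite big_ord_recr.
exact: (ct_add _ _ _ _ IH (comp_cont _ _ ch)).
Qed.

Lemma cesaro_cont (h : W -> C) n : continuous h -> continuous (Defs.cesaro F h n).
Proof. move=> ch; rewrite /Defs.cesaro; exact: (ct_mul _ _ _ _ (ct_cst _ _ _) (sum_cont _ _ ch)). Qed.

Lemma unif_pt (h g : W -> C) : cesaro_unif_cvg F h g ->
  forall y, ((fun n => Defs.cesaro F h n y : C^o) @ \oo --> (g y : C^o)).
Proof.
move=> H y; apply/(@cvgrPdist_lt _ (C^o)) => e e0.
move: (H e e0); apply: filterS => n /(_ y); by rewrite distrC.
Qed.

Lemma lim_uniq (u : nat -> C^o) (a b : C^o) : u @ \oo --> a -> u @ \oo --> b -> a = b.
Proof. move=> ha hb; exact: (cvg_unique (@norm_hausdorff _ (C^o)) ha hb). Qed.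
Variable E : Cfun R W -> FixAlg R F.
Hypothesis hE : forall h : Cfun R W, cesaro_unif_cvg F (sval h) (sval (E h)).

Lemma fa_eq (a b : FixAlg R F) : sval a = sval b -> a = b.
Proof. apply: eq_sig_hprop => x p q; exact: Prop_irrelevance. Qed.

Lemma E_pt (h : Cfun R W) y : (fun n => Defs.cesaro F (sval h) n y : C^o) @ \oo --> (sval (E h) y : C^o).
Proof. exact: unif_pt. Qed.

Lemma E_add (h1 h2 h : Cfun R W) : sval h = (fun y => sval h1 y + sval h2 y) ->
  sval (E h) = (fun y => sval (E h1) y + sval (E h2) y).
Proof.
move=> eh; apply: funext => y; apply: lim_uniq (E_pt h y) _.
have -> : (fun n => Defs.cesaro F (sval h) n y) = (fun n => Defs.cesaro F (sval h1) n y + Defs.cesaro F (sval h2) n y).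
  by apply: funext => n; rewrite /Defs.cesaro eh big_split mulrDr.
exact: cvgD (E_pt h1 y) (E_pt h2 y).
Qed.

Lemma E_scale a (h1 h : Cfun R W) : sval h = (fun y => a * sval h1 y) ->
  sval (E h) = (fun y => a * sval (E h1) y).
Proof.
move=> eh; apply: funext => y; apply: lim_uniq (E_pt h y) _.
have -> : (fun n => Defs.cesaro F (sval h) n y) = (fun n => a * Defs.cesaro F (sval h1) n y).
  by apply: funext => n; rewrite /Defs.cesaro eh -mulr_sumr mulrCA.
exact: (@cvgM (C) _ _ _ (fun _ => a) _ a _ (cvg_cst a) (E_pt h1 y)).
Qed.

Lemma E_pos (h : Cfun R W) : (forall y, 0 <= sval h y) -> forall y, 0 <= sval (E h) y.
Proof.
move=> hp y; rewrite ger0_def; apply/eqP.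
apply/eqP; rewrite -subr_eq0; apply/eqP.
have c1 : (fun n => `|Defs.cesaro F (sval h) n y| - Defs.cesaro F (sval h) n y : C^o) @ \oo --> (`|sval (E h) y| - sval (E h) y : C^o).
  apply: cvgB; last exact: E_pt.
  exact: (cvg_comp _ _ (E_pt h y) (@norm_continuous C (C^o) (sval (E h) y))).
apply: lim_uniq c1 _; apply: cvg_near_cst; apply: nearW => n.
apply/eqP; rewrite subr_eq0 -ger0_def /Defs.cesaro; apply: mulr_ge0.
  by rewrite invr_ge0 ler0n.
by apply: sumr_ge0 => k _; exact: hp.
Qed.

Lemma E_fix (k : FixAlg R F) (h : Cfun R W) : sval h = sval k -> E h = k.
Proof.
move=> eh; apply: fa_eq; apply: funext => y; apply: lim_uniq (E_pt h y) _.
apply: cvg_near_cst; near=> n.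
have itk : forall j, sval k (iter j F y) = sval k y.
  elim=> [|j IH] //=; have /= := congr1 (fun g => g (iter j F y)) (proj2 (proj2_sig k)).
  by rewrite IH.
rewrite /Defs.cesaro eh; under eq_bigr do rewrite itk.
rewrite sumr_const card_ord -[X in _ * X]mulr_natl mulrA mulVf ?mul1r //.
rewrite pnatr_eq0 -lt0n; near: n; exact: nbhs_infty_gt.
Unshelve. all: by end_near.
Qed.

Lemma E_inv (h h' : Cfun R W) : sval h' = sval h \o F -> E h' = E h.
Proof.
move=> eh; apply: fa_eq; apply: funext => y; apply: lim_uniq (E_pt h' y) _.
have -> : (fun n => Defs.cesaro F (sval h') n y) = (fun n => Defs.cesaro F (sval h) n (F y)).
  by apply: funext => n; rewrite /Defs.cesaro eh; congr (_ * _); apply: eq_bigr => k _; rewrite /= -iterSr iterS.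
have := E_pt h (F y); have -> // : sval (E h) (F y) = sval (E h) y.
exact: (congr1 (fun g => g y) (proj2 (proj2_sig (E h)))).
Qed.

Section Psi.
Variable psi : Cfun R W -> C.
Hypothesis hpsi : is_state psi.
Hypothesis hinv : is_invariant F psi.

Lemma st_iter (h : W -> C) (ch : continuous h) k (c : continuous (fun y => h (iter k F y))) :
  psi (exist _ _ c) = psi (exist _ h ch).
Proof.
elim: k c => [|k IH] c; first by apply: st_ext.
have cg := comp_cont h k ch.
have c' : continuous ((fun y => h (iter k F y)) \o F).
  move=> p; exact: (@continuous_comp _ _ _ F _ p (F_cont p) (cg _)).
have -> : psi (exist _ _ c) = psi (exist _ ((fun y => h (iter k F y)) \o F) c').
  by apply: st_ext; apply: funext => y; rewrite iterSr.
rewrite (hinv _ cg c'); exact: IH.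
Qed.

Lemma st_sum (h : W -> C) (ch : continuous h) n (c : continuous (fun y => \sum_(k < n) h (iter k F y))) :
  psi (exist _ _ c) = n%:R * psi (exist _ h ch).
Proof.
elim: n c => [|n IH] c.
  have c0 : continuous (fun _ : W => (0 : C)) by exact: ct_cst.
  rewrite mul0r; transitivity (psi (exist _ _ c0)); last exact: st_const.
  by apply: st_ext; apply: funext => y; rewrite big_ord0.
have cs := sum_cont h n ch; have ci := comp_cont h n ch.
rewrite (st_add' _ _ _ hpsi (exist _ _ cs) (exist _ _ ci)); last first.
  by apply: funext => y /=; rewrite big_ord_recr.
by rewrite IH (st_iter h ch n ci) -natr1 mulrDl mul1r.
Qed.

Lemma st_ces (h : W -> C) (ch : continuous h) n (n0 : (0 < n)%N) (c : continuous (Defs.cesaro F h n)) :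
  psi (exist _ _ c) = psi (exist _ h ch).
Proof.
rewrite (st_scale' _ _ _ hpsi n%:R^-1 (exist _ _ (sum_cont h n ch))) //.
by rewrite st_sum mulKf // pnatr_eq0 -lt0n.
Qed.

Lemma st_E (h : Cfun R W) (c : continuous (sval (E h))) : psi (exist _ _ c) = psi h.
Proof.
apply/eqP; rewrite eq_sym -subr_eq0; apply/eqP; apply: small0 => e e0.
have e20 : 0 < e / 2%:R by rewrite divr_gt0 // ltr0n.
have [n [Hn n0]] := filter_ex (filterI (hE h (e / 2%:R) e20) (nbhs_infty_gt 0)).
have eh : h = exist _ (sval h) (proj2_sig h) by case: h {Hn c}.
have cc := cesaro_cont (sval h) n (proj2_sig h).
rewrite {1}eh -(st_ces (sval h) (proj2_sig h) n n0 cc).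
have cd : continuous (fun y => Defs.cesaro F (sval h) n y - sval (E h) y) by exact: ct_add _ _ _ _ cc (ct_opp _ _ _ c).
rewrite -(st_sub _ _ _ hpsi _ _ cc c cd).
have := st_bound _ _ _ hpsi _ cd (e / 2%:R) (fun y => ltW (Hn y)).
by rewrite mulr2n -splitr.
Qed.
End Psi.

Local Notation A := (FixAlg R F).
Local Notation T := (Circle R).

Lemma fixy (k : A) y : sval k (F y) = sval k y.
Proof. exact: (congr1 (fun g => g y) (proj2 (proj2_sig k))). Qed.

Lemma addA_fix (a b : A) : (fun y => sval a y + sval b y) \o F = (fun y => sval a y + sval b y).
Proof. by apply: funext => y /=; rewrite !fixy. Qed.
Definition addA (a b : A) : A := exist _ (fun y => sval a y + sval b y)
  (conj (ct_add R W _ _ (proj1 (proj2_sig a)) (proj1 (proj2_sig b))) (addA_fix a b)).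
Lemma mulA_fix (a b : A) : (fun y => sval a y * sval b y) \o F = (fun y => sval a y * sval b y).
Proof. by apply: funext => y /=; rewrite !fixy. Qed.
Definition mulA (a b : A) : A := exist _ (fun y => sval a y * sval b y)
  (conj (ct_mul R W _ _ (proj1 (proj2_sig a)) (proj1 (proj2_sig b))) (mulA_fix a b)).
Definition cA (c : C) : A := exist _ (fun _ => c) (conj (ct_cst R W c) erefl).
Lemma scaleA_fix c (a : A) : (fun y => c * sval a y) \o F = (fun y => c * sval a y).
Proof. by apply: funext => y /=; rewrite !fixy. Qed.
Definition scaleA c (a : A) : A := exist _ (fun y => c * sval a y)
  (conj (ct_mul R W _ _ (ct_cst R W c) (proj1 (proj2_sig a))) (scaleA_fix c a)).

Variable rho : A -> Cfun R T.
Hypothesis hrho : is_star_iso rho.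

Lemma rho_add' (a b s : A) : sval s = (fun y => sval a y + sval b y) ->
  sval (rho s) = (fun z => sval (rho a) z + sval (rho b) z).
Proof. case: hrho => _ [H _ _ _ _]; case: a b s => [ga pa] [gb pb] [gs ps] /= e; subst gs; exact: H. Qed.
Lemma rho_scale' c (a s : A) : sval s = (fun y => c * sval a y) ->
  sval (rho s) = (fun z => c * sval (rho a) z).
Proof. case: hrho => _ [_ H _ _ _]; case: a s => [ga pa] [gs ps] /= e; subst gs; exact: H. Qed.
Lemma rho_mul' (a b s : A) : sval s = (fun y => sval a y * sval b y) ->
  sval (rho s) = (fun z => sval (rho a) z * sval (rho b) z).
Proof. case: hrho => _ [_ _ H _ _]; case: a b s => [ga pa] [gb pb] [gs ps] /= e; subst gs; exact: H. Qed.
Lemma rho_one' (s : A) : sval s = (fun _ => 1) -> sval (rho s) = (fun _ => 1).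
Proof. case: hrho => _ [_ _ _ _ H]; case: s => [gs ps] /= e; subst gs; exact: H. Qed.
Lemma rho_const' c (s : A) : sval s = (fun _ => c) -> sval (rho s) = (fun _ => c).
Proof.
move=> e; rewrite (rho_scale' c (cA 1) s); last by rewrite e; apply: funext => y /=; rewrite mulr1.
by rewrite (rho_one' (cA 1)) //; apply: funext => z; rewrite mulr1.
Qed.

Lemma rho_pos (k : A) : (forall y, 0 <= sval k y) -> forall z, 0 <= sval (rho k) z.
Proof.
move=> kp z; case: (boolP (0 <= sval (rho k) z)) => // nw; exfalso.
set w := sval (rho k) z in nw.
set KW := addA k (cA (- w)).
have kw0 : forall y, sval KW y != 0.
  move=> y; rewrite /= subr_eq0; apply/eqP => e; move: nw; by rewrite -e kp.
have cm : continuous (fun y => (sval KW y)^-1) := ct_inv R W _ (proj1 (proj2_sig KW)) kw0.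
have fm : (fun y => (sval KW y)^-1) \o F = (fun y => (sval KW y)^-1).
  by apply: funext => y /=; rewrite fixy.
set M : A := exist _ _ (conj cm fm).
have e1 := rho_mul' KW M (mulA KW M) erefl.
have e2 : sval (rho (mulA KW M)) = (fun _ => 1).
  by apply: rho_one'; apply: funext => y; exact: mulfV (kw0 y).
have e3 := rho_add' k (cA (- w)) KW erefl.
have e4 := rho_const' (- w) (cA (- w)) erefl.
have := congr1 (fun g => g z) (etrans (esym e2) e1); rewrite /= e3 e4 /= subrr mul0r.
by move/eqP; rewrite oner_eq0.
Qed.

Section Rinv.
Variable rinv : Cfun R T -> A.
Hypotheses (rK : cancel rho rinv) (Kr : cancel rinv rho).

Lemma rho_eqA (a b : A) : sval (rho a) = sval (rho b) -> a = b.
Proof. by move=> e; apply: (can_inj rK); apply: cf_eq. Qed.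

Lemma rinv_eq (g : Cfun R T) (s : A) : sval (rho s) = sval g -> rinv g = s.
Proof. by move=> e; apply: rho_eqA; rewrite Kr e. Qed.

Lemma rinv_add' (g1 g2 g : Cfun R T) : sval g = (fun z => sval g1 z + sval g2 z) ->
  sval (rinv g) = (fun y => sval (rinv g1) y + sval (rinv g2) y).
Proof.
move=> e; rewrite (rinv_eq g (addA (rinv g1) (rinv g2))) //.
by rewrite (rho_add' (rinv g1) (rinv g2) (addA (rinv g1) (rinv g2)) erefl) !Kr e.
Qed.

Lemma rinv_scale' c (g1 g : Cfun R T) : sval g = (fun z => c * sval g1 z) ->
  sval (rinv g) = (fun y => c * sval (rinv g1) y).
Proof.
move=> e; rewrite (rinv_eq g (scaleA c (rinv g1))) //.
by rewrite (rho_scale' c (rinv g1) (scaleA c (rinv g1)) erefl) !Kr e.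
Qed.

Lemma rinv_one' (g : Cfun R T) : sval g = (fun _ => 1) -> sval (rinv g) = (fun _ => 1).
Proof.
move=> e; rewrite (rinv_eq g (cA 1)) //.
by rewrite (rho_one' (cA 1) erefl) e.
Qed.

Lemma rinv_pos (g : Cfun R T) : (forall z, 0 <= sval g z) -> forall y, 0 <= sval (rinv g) y.
Proof.
move=> gp y; case: (boolP (0 <= sval (rinv g) y)) => // nw; exfalso.
set w := sval (rinv g) y in nw.
set KW := addA (rinv g) (cA (- w)).
have gw0 : forall z, sval g z - w != 0.
  move=> z; rewrite subr_eq0; apply/eqP => e; move: nw; by rewrite -e gp.
have cgw : continuous (fun z => sval g z - w) := ct_add R T _ _ (proj2_sig g) (ct_cst R T (- w)).
have cm : continuous (fun z => (sval g z - w)^-1) := ct_inv R T _ cgw gw0.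
set M := rinv (exist _ _ cm).
have e0 : mulA KW M = cA 1.
  apply: rho_eqA; rewrite (rho_mul' KW M (mulA KW M) erefl) (rho_one' (cA 1) erefl).
  rewrite (rho_add' (rinv g) (cA (- w)) KW erefl) (rho_const' (- w) (cA (- w)) erefl) /M !Kr /=.
  by apply: funext => z; rewrite mulfV.
have := congr1 (fun a : A => sval a y) e0; rewrite /= subrr mul0r.
by move/eqP; rewrite eq_sym oner_eq0.
Qed.
End Rinv.

Lemma main_in :
  [/\ (forall mu : Cfun R T -> C, is_state mu ->
         is_state (Tmap rho E mu) /\ is_invariant F (Tmap rho E mu)),
      (forall mu nu : Cfun R T -> C, is_state mu -> is_state nu ->
         Tmap rho E mu = Tmap rho E nu -> mu = nu),
      (forall psi : Cfun R W -> C,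
         is_state psi -> is_invariant F psi ->
         exists2 mu : Cfun R T -> C, is_state mu & Tmap rho E mu = psi) &
      (forall (mu nu : Cfun R T -> C) (t : C),
         is_state mu -> is_state nu -> 0 <= t <= 1 ->
         Tmap rho E (fun g => t * mu g + (1 - t) * nu g)
         = (fun h => t * Tmap rho E mu h + (1 - t) * Tmap rho E nu h))].
Proof.
have [rinv rK Kr] := proj1 hrho.
split.
- move=> mu hmu; split.
  + split.
    * move=> h1 h2 c1 c2 c; rewrite /Tmap.
      apply: (st_add' _ _ mu hmu).
      apply: (rho_add' (E (exist _ h1 c1)) (E (exist _ h2 c2)) (E (exist _ _ c))).
      exact: (E_add (exist _ h1 c1) (exist _ h2 c2) (exist _ _ c) erefl).
    * move=> a h c1 c; rewrite /Tmap; apply: (st_scale' _ _ mu hmu a).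
      apply: (rho_scale' a (E (exist _ h c1)) (E (exist _ _ c))).
      exact: (E_scale a (exist _ h c1) (exist _ _ c) erefl).
    * move=> h c hp; rewrite /Tmap; apply: (st_pos' _ _ mu hmu) => z; apply: rho_pos => y.
      exact: (E_pos (exist _ h c) hp).
    * move=> c; rewrite /Tmap (E_fix (cA 1) (exist _ _ c) erefl); apply: (st_one' _ _ mu hmu).
      exact: (rho_one' (cA 1) erefl).
  + move=> h c c'; rewrite /Tmap (E_inv (exist _ h c) (exist _ _ c') erefl) //.
- move=> mu nu hmu hnu e; apply: funext => g.
  have ck := proj1 (proj2_sig (rinv g)).
  have := congr1 (fun T => T (exist _ (sval (rinv g)) ck)) e.
  by rewrite /Tmap (E_fix (rinv g) (exist _ _ ck) erefl) Kr.
- move=> psi hpsi hinv.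
  exists (fun g => psi (exist _ (sval (rinv g)) (proj1 (proj2_sig (rinv g))))).
  + split.
    * move=> h1 h2 c1 c2 c; apply: (st_add' _ _ psi hpsi) => /=.
      exact: (rinv_add' _ rK Kr (exist _ h1 c1) (exist _ h2 c2) (exist _ _ c) erefl).
    * move=> a h c1 c; apply: (st_scale' _ _ psi hpsi a) => /=.
      exact: (rinv_scale' _ rK Kr a (exist _ h c1) (exist _ _ c) erefl).
    * move=> h c hp; apply: (st_pos' _ _ psi hpsi) => y /=.
      exact: (rinv_pos _ rK Kr (exist _ h c) hp).
    * move=> c; apply: (st_one' _ _ psi hpsi) => /=.
      exact: (rinv_one' _ rK Kr (exist _ _ c) erefl).
  + apply: funext => h; rewrite /Tmap rK.
    exact: (st_E psi hpsi hinv h).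
- by [].
Qed.
End Main.

Theorem mainTheorem19 (R : realType) (X : topologicalType)
  (hX : hausdorff_space X) (cX : compact [set: X])
  (theta : X -> X)
  (htheta : exists g : X -> X,
     [/\ continuous theta, continuous g, cancel theta g & cancel g theta])
  (mu_o : Cfun R X -> R[i]) (hUE : uniquely_ergodic_with theta mu_o)
  (f : X -> Circle R) (hf : continuous f)
  (E : Cfun R (X * Circle R)%type -> FixAlg R (skew_product theta f))
  (hE : forall h : Cfun R (X * Circle R)%type,
     cesaro_unif_cvg (skew_product theta f) (sval h) (sval (E h)))
  (hnontriv : exists h : FixAlg R (skew_product theta f),
     exists p q, sval h p != sval h q)
  (rho : FixAlg R (skew_product theta f) -> Cfun R (Circle R))
  (hrho : is_star_iso rho) :
  [/\ (forall mu : Cfun R (Circle R) -> R[i], is_state mu ->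
         is_state (Tmap rho E mu) /\ is_invariant (skew_product theta f) (Tmap rho E mu)),
      (forall mu nu : Cfun R (Circle R) -> R[i], is_state mu -> is_state nu ->
         Tmap rho E mu = Tmap rho E nu -> mu = nu),
      (forall psi : Cfun R (X * Circle R)%type -> R[i],
         is_state psi -> is_invariant (skew_product theta f) psi ->
         exists2 mu : Cfun R (Circle R) -> R[i], is_state mu & Tmap rho E mu = psi) &
      (forall (mu nu : Cfun R (Circle R) -> R[i]) (t : R[i]),
         is_state mu -> is_state nu -> 0 <= t <= 1 ->
         Tmap rho E (fun g => t * mu g + (1 - t) * nu g)
         = (fun h => t * Tmap rho E mu h + (1 - t) * Tmap rho E nu h))].
Proof.
have [g [ctheta _ _ _]] := htheta.
exact: (main_in _ _ _ _ ctheta hf _ hE _ hrho).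
Qed.
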